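(* Under Assumption A1 (with the delay process indexed by all integers), the impulse response of the channel uncertainty satisfies the following. 1. For all $i\in\mathcal{D}$ and $k=0,1,2,\dots$: $\mathbb{E}\{\omega(k,k-i)\}=0$. 2. For all $i\in\mathcal{D}$ and $k_1,k_2\in\{0,1,2,\dots\}$: $$\mathbb{E}\{\omega(k_1,k_1-i)\omega(k_2,k_2-i)\}=\delta(k_1-k_2)\,\alpha_i^2p_i(1-p_i).$$ 3. For all $i_1\neq i_2$ in $\mathcal{D}$ and $k_1,k_2\in\{0,1,2,\dots\}$: $$\mathbb{E}\{\omega(k_1,k_1-i_1)\omega(k_2,k_2-i_2)\}=-\delta(k_1-i_1-k_2+i_2)\,\alpha_{i_1}\alpha_{i_2}p_{i_1}p_{i_2}.$$
   Context: Fix an integer $\bar\tau\ge1$, let $\mathcal{D}=\{0,\dots,\bar\tau\}$, and fix real weights $\alpha_0,\dots,\alpha_{\bar\tau}$. Assumption A1: $\{\tau_n\}$ is an i.i.d. sequence of $\mathcal{D}$-valued random variables with $\Pr\{\tau_n=i\}=p_i$, where $p_i\in[0,1]$ and $\sum_ip_i=1$. Let $\delta$ denote the Kronecker delta ($\delta(0)=1$, $\delta(m)=0$ for $m\ne0$). The impulse response of the channel uncertainty is $\omega(k,n)=\alpha_i[\delta(\tau_n-i)-p_i]$ if $k=n+i$ with $i\in\mathcal{D}$, and $\omega(k,n)=0$ otherwise. *)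

(* Defs.v *)
From HB Require Import structures.
From mathcomp Require Import all_boot all_order all_algebra.
From mathcomp Require Import all_classical all_reals all_analysis.
Set Implicit Arguments. Unset Strict Implicit. Unset Printing Implicit Defensive.
Import Order.TTheory GRing.Theory Num.Theory.
Local Open Scope classical_set_scope.
Local Open Scope ring_scope.

Definition kdelta {R : nzRingType} (m : int) : R := (m == 0)%:R.

(* Impulse response of the channel uncertainty:
   omega(k,n) = alpha_i [delta(tau_n - i) - p_i] if k = n + i with i in {0..taubar},
   and 0 otherwise. Time indices are integers. *)
Definition omega {R : nzRingType} {T : Type} (taubar : nat) (alpha p : nat -> R)
  (tau : int -> T -> nat) (k n : int) : T -> R :=
  fun w => if (0 <= k - n) && (`|k - n|%N <= taubar)%N then
             alpha `|k - n|%N * (kdelta (Posz (tau n w) - Posz `|k - n|%N) - p `|k - n|%N)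
           else 0.

Definition mutually_independent {d} {T : measurableType d} {R : realType}
  (P : probability T R) (tau : int -> T -> nat) : Prop :=
  forall (s : seq int) (v : int -> nat), uniq s ->
    P (\big[setI/setT]_(j <- s) [set w | tau j w = v j]) =
    (\prod_(j <- s) P [set w | tau j w = v j])%E.

Definition assumptionA1 {d} {T : measurableType d} {R : realType}
  (P : probability T R) (taubar : nat) (p : nat -> R) (tau : int -> T -> nat) : Prop :=
  [/\ (forall n (i : nat), measurable [set w | tau n w = i])
      /\ (forall n w, (tau n w <= taubar)%N),
      (forall n (i : nat), (i <= taubar)%N -> P [set w | tau n w = i] = (p i)%:E),
      (forall i : nat, (i <= taubar)%N -> 0 <= p i <= 1),
      \sum_(0 <= i < taubar.+1) p i = 1
    & mutually_independent P tau].

(* Main.v *)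
Require Import Defs.
From HB Require Import structures.
From mathcomp Require Import all_boot all_order all_algebra.
From mathcomp Require Import all_classical all_reals all_analysis.
From mathcomp Require Import ring lra.
Import Order.TTheory GRing.Theory Num.Theory.
Local Open Scope ring_scope.
Local Open Scope classical_set_scope.

Section aux.
Context (d : measure_display) (T : measurableType d) (R : realType) (P : probability T R).

Lemma Lfun_ind (A : set T) : measurable A -> (\1_A : T -> R) \in Lfun P 1.
Proof. by move=> mA; apply/Lfun1_integrable; exact: integrable_indic. Qed.

Lemma key (A B : set T) (a b c pa pb pab : R) : measurable A -> measurable B ->
  P A = pa%:E -> P B = pb%:E -> P (A `&` B) = pab%:E ->
  ('E_P[(fun w => c * ((\1_A w - a) * (\1_B w - b)))%R] =
   (c * (pab - b * pa - a * pb + a * b))%:E)%E.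
Proof.
move=> mA mB PA PB PAB.
have mAB : measurable (A `&` B) by exact: measurableI.
have -> : (fun w => c * ((\1_A w - a) * (\1_B w - b))) =
  c \o* ((((\1_(A `&` B) \- b \o* \1_A) \- a \o* \1_B) \+ cst (a * b))).
  apply/funext => w /=; rewrite indicI /=; ring.
have L1 := @Lfun_ind _ mA; have L2 := @Lfun_ind _ mB; have L3 := @Lfun_ind _ mAB.
have LA : b \o* \1_A \in Lfun P 1 by apply: Lfun_scale.
have LB : a \o* \1_B \in Lfun P 1 by apply: Lfun_scale.
have LC : cst (a * b) \in Lfun P 1 by apply: Lfun_cst.
have L4 : (\1_(A `&` B) \- b \o* \1_A) \in Lfun P 1 by apply: rpredB.
have L5 : ((\1_(A `&` B) \- b \o* \1_A) \- a \o* \1_B) \in Lfun P 1 by apply: rpredB.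
have L6 : (((\1_(A `&` B) \- b \o* \1_A) \- a \o* \1_B) \+ cst (a * b)) \in Lfun P 1 by apply: rpredD.
rewrite expectationZl // expectationD // expectationB // expectationB //.
rewrite expectationZl // expectationZl // !expectation_indic // expectation_cst.
by rewrite PA PB PAB -!EFinM.
Qed.
End aux.
Arguments key {d T R P A B a b c pa pb pab}.

Lemma omegaE (R : realType) (T : Type) taubar (alpha p : nat -> R) (tau : int -> T -> nat)
  (k : int) (i : nat) : (i <= taubar)%N ->
  omega taubar alpha p tau k (k - i%:Z) =
  (fun w => alpha i * (\1_[set w | tau (k - i%:Z) w = i] w - p i)).
Proof.
move=> hi; apply/funext => w; rewrite /omega.
have -> : k - (k - i%:Z) = i%:Z by ring.
rewrite /= hi /kdelta subr_eq0 /indic.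
congr (_ * (_%:R - _)).
rewrite eqz_nat; apply/eqP; case: (boolP (w \in _)) => [/set_mem /= ->|h]; first by rewrite eqxx.
have hn : tau (k - i%:Z) w != i by apply: contra h => /eqP hh; apply: mem_set.
by rewrite (negbTE hn).
Qed.

Theorem lemma3p1 (d : measure_display) (T : measurableType d) (R : realType)
  (P : probability T R) (taubar : nat) (alpha p : nat -> R) (tau : int -> T -> nat) :
  (1 <= taubar)%N ->
  assumptionA1 P taubar p tau ->
  [/\ (forall (i k : nat), (i <= taubar)%N ->
         ('E_P[omega taubar alpha p tau k (k%:Z - i%:Z)] = 0)%E),
      (forall (i k1 k2 : nat), (i <= taubar)%N ->
         ('E_P[omega taubar alpha p tau k1 (k1%:Z - i%:Z)
               \* omega taubar alpha p tau k2 (k2%:Z - i%:Z)]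
          = (kdelta (k1%:Z - k2%:Z) * alpha i ^+ 2 * p i * (1 - p i))%:E)%E)
    & (forall (i1 i2 k1 k2 : nat), (i1 <= taubar)%N -> (i2 <= taubar)%N -> i1 != i2 ->
         ('E_P[omega taubar alpha p tau k1 (k1%:Z - i1%:Z)
               \* omega taubar alpha p tau k2 (k2%:Z - i2%:Z)]
          = (- (kdelta (k1%:Z - i1%:Z - k2%:Z + i2%:Z) * alpha i1 * alpha i2
                * p i1 * p i2))%:E)%E)].
Proof.
move=> _ [[mtau _] Ptau _ _ indep].
set S := fun (n : int) (i : nat) => [set w | tau n w = i].
have indep2 : forall n1 n2 i1 i2, n1 != n2 ->
    P (S n1 i1 `&` S n2 i2) = (P (S n1 i1) * P (S n2 i2))%E.
  move=> n1 n2 i1 i2 hn.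
  have := indep [:: n1; n2] (fun j => if j == n1 then i1 else i2).
  rewrite /= inE hn andbT => /(_ isT).
  rewrite !big_cons !big_nil setIT mule1 eqxx eq_sym (negbTE hn) /S => <-.
  by [].
have prodE : forall (k1 k2 : int) (i1 i2 : nat), (i1 <= taubar)%N -> (i2 <= taubar)%N ->
    omega taubar alpha p tau k1 (k1 - i1%:Z) \* omega taubar alpha p tau k2 (k2 - i2%:Z)
    = (fun w => (alpha i1 * alpha i2) * ((\1_(S (k1 - i1%:Z) i1) w - p i1) *
                 (\1_(S (k2 - i2%:Z) i2) w - p i2))).
  move=> k1 k2 i1 i2 h1 h2; rewrite !omegaE //; apply/funext => w /=; ring.
have mS : forall n i, measurable (S n i) by move=> n i; exact: mtau.
have PS : forall n i, (i <= taubar)%N -> P (S n i) = (p i)%:E by move=> n i hi; exact: Ptau.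
split.
- move=> i k hi; rewrite omegaE //.
  have -> : (fun w => alpha i * (\1_[set w | tau (k%:Z - i%:Z) w = i] w - p i)) =
     (fun w => alpha i * ((\1_(S (k%:Z - i%:Z) i) w - p i) * (\1_setT w - 0))).
    by apply/funext => w; rewrite indicT /= subr0 mulr1.
  rewrite (key (pab := p i) (mS _ _) measurableT (PS _ _ hi) (probability_setT P)); last first.
    by rewrite setIT PS.
  congr EFin; ring.
- move=> i k1 k2 hi; rewrite prodE //.
  have [<-|hk] := eqVneq k1 k2.
    rewrite (key (pab := p i) (mS _ _) (mS _ _) (PS _ _ hi) (PS _ _ hi)); last first.
      by rewrite setIid PS.
    rewrite /kdelta subrr eqxx; congr EFin; rewrite mul1r; ring.
  have hn : k1%:Z - i%:Z != k2%:Z - i%:Z.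
    by apply: contra hk; rewrite (inj_eq (addIr _)) eqz_nat.
  rewrite (key (pab := p i * p i) (mS _ _) (mS _ _) (PS _ _ hi) (PS _ _ hi)); last first.
    by rewrite indep2 // !PS.
  rewrite /kdelta subr_eq0 eqz_nat (negbTE hk) /=; congr EFin; ring.
- move=> i1 i2 k1 k2 h1 h2 hi; rewrite prodE //.
  have -> : k1%:Z - i1%:Z - k2%:Z + i2%:Z = (k1%:Z - i1%:Z) - (k2%:Z - i2%:Z) by ring.
  rewrite /kdelta subr_eq0.
  have [<-|hn] := eqVneq (k1%:Z - i1%:Z) (k2%:Z - i2%:Z).
    rewrite (key (pab := 0) (mS _ _) (mS _ _) (PS _ _ h1) (PS _ _ h2)); last first.
      have -> : S (k1%:Z - i1%:Z) i1 `&` S (k1%:Z - i1%:Z) i2 = set0.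
        by apply/seteqP; split => // w [/= e1 e2]; move: hi; rewrite -e1 e2 eqxx.
      by rewrite measure0.
    rewrite mul1r; congr EFin; ring.
  rewrite (key (pab := p i1 * p i2) (mS _ _) (mS _ _) (PS _ _ h1) (PS _ _ h2)); last first.
    by rewrite indep2 // !PS.
  rewrite mul0r; congr EFin; ring.
Qed.
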